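(* For every $m\in\mathbb Z\setminus\{0\}$ and every $\xi\in\mathbb Z_m$, the group $\overline{BS}(m,\xi)$ is not finitely presented.
   Context: For $p,q\in\mathbb Z\setminus\{0\}$, $BS(p,q)=\langle a,b\mid ab^pa^{-1}=b^q\rangle$, marked by $(a,b)$. The space of marked groups $\mathcal G_2$ is the set of normal subgroups of $\mathbb F(a,b)$ with the ultrametric $d(N_1,N_2)=e^{-\lambda}$, $\lambda$ the minimal word length of an element of $N_1\triangle N_2$. $\mathbb Z_m$ is the ring of $m$-adic integers. For $\xi\in\mathbb Z_m$, $\overline{BS}(m,\xi)$ denotes the limit in $\mathcal G_2$ of $BS(m,\xi_n)$ for any sequence of integers $(\xi_n)$ with $|\xi_n|\to\infty$ and $\xi_n\to\xi$ in $\mathbb Z_m$ (the limit exists and is independent of the sequence). *)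

(* Defs.v *)
From HB Require Import structures.
From mathcomp Require Import all_boot all_order all_algebra.
Set Implicit Arguments. Unset Strict Implicit. Unset Printing Implicit Defensive.
Import Order.TTheory GRing.Theory Num.Theory.

Inductive letter := LA | LAi | LB | LBi.
Definition word := list letter.

Definition inv_letter (x : letter) : letter :=
  match x with LA => LAi | LAi => LA | LB => LBi | LBi => LB end.
Definition letter_eqb (x y : letter) : bool :=
  match x, y with
  | LA, LA | LAi, LAi | LB, LB | LBi, LBi => true | _, _ => false end.

Lemma letter_eqP : Equality.axiom letter_eqb.
Proof. by case; case; constructor. Qed.
HB.instance Definition _ := hasDecEq.Build letter letter_eqP.

Definition inv_word (w : word) : word := rev (map inv_letter w).

Definition reduce (w : word) : word :=
  foldr (fun x acc => match acc with
                      | y :: t => if letter_eqb y (inv_letter x) then t else x :: acc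
                      | [::] => [:: x] end) [::] w.

Definition is_normal (N : word -> Prop) : Prop :=
  [/\ (forall u v, reduce u = reduce v -> (N u <-> N v)),
      N [::],
      (forall u v, N u -> N v -> N (u ++ v)),
      (forall u, N u -> N (inv_word u)) &
      (forall g u, N u -> N (g ++ u ++ inv_word g))].

Definition nclosure (R : word -> Prop) (w : word) : Prop :=
  forall N, is_normal N -> (forall r, R r -> N r) -> N w.

(* The marked group F(a,b)/N is finitely presented:
   N is the normal closure of a finite set of words. *)
Definition finitely_presented (N : word -> Prop) : Prop :=
  exists rs : list word, forall w, N w <-> nclosure (fun r => r \in rs) w.

Definition bpow (k : int) : word :=
  match k with Posz n => nseq n LB | Negz n => nseq n.+1 LBi end.

Definition bs_rel (p q : int) : word :=
  [:: LA] ++ bpow p ++ [:: LAi] ++ bpow (- q).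

(* kernel of F(a,b) -> BS(p,q), i.e. BS(p,q) as a point of the space of marked groups *)
Definition BS (p q : int) : word -> Prop := nclosure (fun r => r = bs_rel p q).

(* ---- Convergence in the space of marked groups G_2 ----
   d(N_n, N) -> 0 : for each lambda, eventually N_n and N agree on all
   words of length <= lambda. *)
Definition marked_converges (Ns : nat -> word -> Prop) (N : word -> Prop) : Prop :=
  forall lambda : nat, exists n0 : nat, forall n, (n0 <= n)%N ->
    forall w : word, (size w <= lambda)%N -> (Ns n w <-> N w).

(* ---- m-adic integers ----
   An element of Z_m is represented by a compatible sequence of integers
   xi k (a representative modulo m^k), with xi (k+1) = xi k mod m^k. *)
Definition madic (m : int) (xi : nat -> int) : Prop :=
  forall k : nat, (xi k.+1 = xi k %[mod m ^+ k])%Z.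

Definition madic_converges (m : int) (xs : nat -> int) (xi : nat -> int) : Prop :=
  forall k : nat, exists n0 : nat, forall n, (n0 <= n)%N ->
    (xs n = xi k %[mod m ^+ k])%Z.

Definition tends_to_infty (xs : nat -> int) : Prop :=
  forall M : nat, exists n0 : nat, forall n, (n0 <= n)%N -> (M < `|xs n|)%N.

(* Main.v *)
Require Import Defs.
From mathcomp Require Import all_boot all_order all_algebra.
Import GRing.Theory Num.Theory.
From mathcomp Require Import zify ring lra.
Import Order.TTheory.
Set Implicit Arguments. Unset Strict Implicit.

Module M_A.

Definition rstep (x : letter) (acc : word) : word :=
  match acc with
  | y :: t => if letter_eqb y (inv_letter x) then t else x :: acc
  | [::] => [:: x] end.

Lemma reduce_cons x w : reduce (x :: w) = rstep x (reduce w).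
Proof. by []. Qed.

Lemma reduceE w : reduce w = foldr rstep [::] w.
Proof. by []. Qed.

Lemma inv_letterK x : inv_letter (inv_letter x) = x.
Proof. by case: x. Qed.

Lemma letter_eqbE x y : letter_eqb x y = (x == y).
Proof. by []. Qed.

Lemma inv_word_cons x w : inv_word (x :: w) = inv_word w ++ [:: inv_letter x].
Proof. by rewrite /inv_word /= rev_cons cats1. Qed.

Lemma inv_word_cat u v : inv_word (u ++ v) = inv_word v ++ inv_word u.
Proof. by rewrite /inv_word map_cat rev_cat. Qed.

Lemma inv_wordK w : inv_word (inv_word w) = w.
Proof.
rewrite /inv_word map_rev revK -map_comp.
by rewrite (eq_map (g := id)) ?map_id // => x; exact: inv_letterK.
Qed.

Section Act.
Variable T : Type.
Variable step : letter -> T -> T.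
Hypothesis hstep : forall x p, step (inv_letter x) (step x p) = p.

Definition act (w : word) (p : T) : T := foldl (fun p x => step x p) p w.

Lemma act_cat u v p : act (u ++ v) p = act v (act u p).
Proof. by rewrite /act foldl_cat. Qed.

Lemma act_cons x w p : act (x :: w) p = act w (step x p).
Proof. by []. Qed.

Lemma act_rstep x r p : act (rstep x r) p = act (x :: r) p.
Proof.
case: r => [|y t] //=.
rewrite letter_eqbE; case: eqP => // ->.
by rewrite /act /= hstep.
Qed.

Lemma act_reduce w p : act (reduce w) p = act w p.
Proof.
elim: w p => [|x w IH] p //=.
by rewrite -/(reduce w) act_rstep act_cons IH.
Qed.

Lemma act_inv u p : act (inv_word u) (act u p) = p.
Proof.
elim: u p => [|x u IH] p //=.
by rewrite inv_word_cons act_cat act_cons IH /act /= hstep.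
Qed.

Definition kerA (w : word) : Prop := forall p, act w p = p.

Lemma kerA_normal : is_normal kerA.
Proof.
split.
- move=> u v e; split => H p.
  + by rewrite -act_reduce -e act_reduce.
  + by rewrite -act_reduce e act_reduce.
- by [].
- by move=> u v Hu Hv p; rewrite act_cat Hu Hv.
- by move=> u Hu p; rewrite -{2}(act_inv u p) Hu.
- move=> g u Hu p; rewrite !act_cat Hu; exact: act_inv.
Qed.

End Act.

Fixpoint reduced (w : word) : bool :=
  match w with
  | x :: ((y :: _) as t) => (y != inv_letter x) && reduced t
  | _ => true end.

Lemma reduced_tail x t : reduced (x :: t) -> reduced t.
Proof. by case: t => //= y t /andP[]. Qed.

Lemma rstep_reduced x r : reduced r -> reduced (rstep x r).
Proof.
case: r => [|y t] //= Hr.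
rewrite letter_eqbE; case: eqP => [_|ne].
- exact: reduced_tail Hr.
- by rewrite /= Hr andbT; apply/eqP.
Qed.

Lemma reduce_reduced w : reduced (reduce w).
Proof. by elim: w => //= x w IH; exact: rstep_reduced. Qed.

Lemma rstep_cancel x r : reduced r -> rstep x (rstep (inv_letter x) r) = r.
Proof.
case: r => [|y t] /= Hr.
- by rewrite letter_eqbE eqxx.
- rewrite letter_eqbE inv_letterK; case: eqP => [ey|ne].
  + subst y; case: t Hr => [|z t'] //= /andP[nz _].
    by rewrite letter_eqbE (negbTE nz).
  + by rewrite /rstep letter_eqbE eqxx.
Qed.

Lemma foldr_rstep_reduced r a : reduced r -> reduced (foldr rstep r a).
Proof. by move=> Hr; elim: a => //= x a IH; exact: rstep_reduced. Qed.

Lemma foldr_reduce r a : reduced r -> foldr rstep r a = foldr rstep r (reduce a).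
Proof.
move=> Hr; elim: a => [|x a IH] //=.
rewrite -/(reduce a) IH.
case E: (reduce a) => [|y t] //=.
rewrite letter_eqbE; case: eqP => [ey|] //=.
rewrite ey rstep_cancel //; exact: foldr_rstep_reduced.
Qed.

Lemma reduce_cat u v : reduce (u ++ v) = foldr rstep (reduce v) u.
Proof. by rewrite reduceE foldr_cat. Qed.

Lemma reduce_catl u u' v : reduce u = reduce u' -> reduce (u ++ v) = reduce (u' ++ v).
Proof.
move=> e; rewrite !reduce_cat (foldr_reduce _ (reduce_reduced v)) e.
by rewrite -(foldr_reduce _ (reduce_reduced v)).
Qed.

Lemma reduce_catr u v v' : reduce v = reduce v' -> reduce (u ++ v) = reduce (u ++ v').
Proof. by move=> e; rewrite !reduce_cat e. Qed.

Lemma reduce_cancel x w : reduce (x :: inv_letter x :: w) = reduce w.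
Proof.
rewrite !reduce_cons rstep_cancel //; exact: reduce_reduced.
Qed.

Lemma reduce_inv_cancel s t : reduce (s ++ inv_word s ++ t) = reduce t.
Proof.
elim: s t => [|x s IH] t //.
by rewrite inv_word_cons -catA reduce_cons IH -reduce_cons reduce_cancel.
Qed.

Lemma reduce_inv_cancel' s t : reduce (inv_word s ++ s ++ t) = reduce t.
Proof. by rewrite -{2}(inv_wordK s) reduce_inv_cancel. Qed.

End M_A.
Import M_A.

Module M_C.

Section Cong.
Variable N : word -> Prop.
Hypothesis hN : is_normal N.

Definition eqv u v := N (u ++ inv_word v).

Lemma memN_free u v : reduce u = reduce v -> N u -> N v.
Proof. by case: hN => H _ _ _ _ e; case: (H u v e). Qed.

Lemma N0 : N [::].
Proof. by case: hN. Qed.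

Lemma NM u v : N u -> N v -> N (u ++ v).
Proof. by case: hN => _ _ H _ _; exact: H. Qed.

Lemma NV u : N u -> N (inv_word u).
Proof. by case: hN => _ _ _ H _; exact: H. Qed.

Lemma NJ g u : N u -> N (g ++ u ++ inv_word g).
Proof. by case: hN => _ _ _ _ H; exact: H. Qed.

Lemma eqv_free u v : reduce u = reduce v -> eqv u v.
Proof.
move=> e; apply: (memN_free (u := [::])); last exact: N0.
rewrite (reduce_catl _ e) -[v ++ _]cats0 -catA reduce_inv_cancel //.
Qed.

Lemma eqv_refl u : eqv u u.
Proof. exact: eqv_free. Qed.

Lemma eqv_sym u v : eqv u v -> eqv v u.
Proof. by move=> /NV; rewrite /eqv inv_word_cat inv_wordK. Qed.

Lemma eqv_trans u v w : eqv u v -> eqv v w -> eqv u w.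
Proof.
move=> H1 H2; apply: (memN_free _ (NM H1 H2)).
rewrite -catA; apply: reduce_catr; exact: reduce_inv_cancel'.
Qed.

Lemma eqv_cong s t u v : eqv u v -> eqv (s ++ u ++ t) (s ++ v ++ t).
Proof.
move=> H; apply: (memN_free _ (NJ s H)).
rewrite /eqv !inv_word_cat !catA -(catA _ t) -(catA _ (inv_word v)).
rewrite -!catA; do 2 apply: reduce_catr.
by rewrite reduce_inv_cancel.
Qed.

Lemma eqv_cat u u' v v' : eqv u u' -> eqv v v' -> eqv (u ++ v) (u' ++ v').
Proof.
move=> H1 H2; apply: (eqv_trans (v := u' ++ v)).
- by have := eqv_cong [::] v H1; rewrite /= .
- by have := eqv_cong u' [::] H2; rewrite !cats0.
Qed.

Lemma eqv_inv u v : eqv u v -> eqv (inv_word u) (inv_word v).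
Proof.
move=> H; have := NJ (inv_word u) (eqv_sym H).
rewrite /eqv inv_wordK => H'; apply: (memN_free _ H').
rewrite inv_wordK; apply: reduce_catr.
by rewrite -catA -{2}(cats0 v); apply: reduce_catr; rewrite -[inv_word u ++ u]cats0 -catA reduce_inv_cancel'.
Qed.

Lemma memN_eqv w : eqv w [::] -> N w.
Proof. by rewrite /eqv /= cats0. Qed.

End Cong.

End M_C.
Import M_C.

Module M_D.
Local Open Scope ring_scope.

Lemma inv_bpow z : inv_word (bpow z) = bpow (- z).
Proof.
have E n x : inv_word (nseq n x) = nseq n (inv_letter x).
  by rewrite /inv_word map_nseq rev_nseq.
by case: z => [[|n]|n] //; apply: E.
Qed.

Lemma bpowS z : reduce (bpow (z + 1)) = reduce (LB :: bpow z).
Proof.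
case: z => [n|[|k]].
- by rewrite -PoszD addn1.
- by [].
- have -> : Negz k.+1 + 1 = Negz k by rewrite !NegzE; lia.
  by rewrite -[bpow (Negz k.+1)]/(LBi :: bpow (Negz k)) reduce_cancel.
Qed.

Lemma bpowP z : reduce (bpow (z - 1)) = reduce (LBi :: bpow z).
Proof.
case: z => [[|n]|k].
- by [].
- have -> : Posz n.+1 - 1 = Posz n by lia.
  by rewrite -[bpow (Posz n.+1)]/(LB :: bpow n) reduce_cancel.
- have -> : Negz k - 1 = Negz k.+1 by rewrite !NegzE; lia.
  by [].
Qed.

Lemma bpowD x y : reduce (bpow (x + y)) = reduce (bpow x ++ bpow y).
Proof.
case: x => n.
- elim: n => [|n IH]; first by rewrite add0r.
  have -> : Posz n.+1 + y = (Posz n + y) + 1 by lia.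
  by rewrite bpowS reduce_cons IH.
- elim: n => [|n IH].
  + have -> : Negz 0 + y = y - 1 by rewrite NegzE; lia.
    by rewrite bpowP.
  + have -> : Negz n.+1 + y = (Negz n + y) - 1 by rewrite !NegzE; lia.
    by rewrite bpowP reduce_cons IH.
Qed.

Definition Tw (x : int) : word := LA :: bpow x ++ [:: LAi].

Lemma TwD x y : reduce (Tw (x + y)) = reduce (Tw x ++ Tw y).
Proof.
rewrite /Tw cat_cons !reduce_cons; congr (rstep LA _).
rewrite -catA reduce_cat [in RHS]reduce_cat.
rewrite (_ : reduce ([:: LAi] ++ LA :: _) = reduce (bpow y ++ [:: LAi])); last exact: (reduce_cancel LAi).
rewrite -(reduce_cat (bpow x)) catA -reduce_cat; apply: reduce_catl; exact: bpowD.
Qed.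

Lemma inv_Tw x : inv_word (Tw x) = Tw (- x).
Proof.
by rewrite /Tw inv_word_cons inv_word_cat inv_bpow.
Qed.

Definition zK (m : int) (K : nat) : word :=
  nseq K LA ++ bpow (m ^+ K) ++ nseq K LAi.
Definition wK (m : int) (K : nat) : word :=
  zK m K ++ [:: LB] ++ inv_word (zK m K) ++ [:: LBi].

Lemma nseqSr (T : Type) n (x : T) : nseq n.+1 x = nseq n x ++ [:: x].
Proof. by elim: n => //= n <-. Qed.

Section BSder.
Variables (m q : int) (N : word -> Prop).
Hypothesis hN : is_normal N.
Hypothesis hrel : N (bs_rel m q).

Lemma base : eqv N (Tw m) (bpow q).
Proof. by rewrite /eqv inv_bpow /Tw cat_cons -catA. Qed.

Lemma T_nat (n : nat) : eqv N (Tw (m * n%:Z)) (bpow (q * n%:Z)).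
Proof.
elim: n => [|n IH].
  by rewrite !mulr0; apply: (eqv_free hN).
have e1 : m * n.+1%:Z = m * n%:Z + m by rewrite intS; ring.
have e2 : q * n.+1%:Z = q * n%:Z + q by rewrite intS; ring.
rewrite e1 e2; apply: (eqv_trans hN (v := Tw (m * n%:Z) ++ Tw m)).
  by apply: (eqv_free hN); exact: TwD.
apply: (eqv_trans hN (v := bpow (q * n%:Z) ++ bpow q)).
  exact: eqv_cat IH base.
by apply: (eqv_free hN); rewrite bpowD.
Qed.

Lemma T_int (k : int) : eqv N (Tw (m * k)) (bpow (q * k)).
Proof.
case: k => n; first exact: T_nat.
rewrite NegzE !mulrN -inv_Tw -inv_bpow; apply: eqv_inv => //.
exact: T_nat.
Qed.

Lemma depth (j : nat) (k : int) :
  eqv N (nseq j LA ++ bpow (m ^+ j * k) ++ nseq j LAi) (bpow (q ^+ j * k)).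
Proof.
elim: j k => [|j IH] k.
  by rewrite /= cats0 !expr0 !mul1r; apply: eqv_refl.
have -> : m ^+ j.+1 * k = m ^+ j * (m * k) by rewrite exprSr; ring.
rewrite [nseq j.+1 LAi]nseqSr.
have := eqv_cong hN [:: LA] [:: LAi] (IH (m * k)).
rewrite /= -!catA => H.
apply: (eqv_trans hN H).
have -> : q ^+ j.+1 * k = q * (q ^+ j * k) by rewrite exprS; ring.
have := T_int (q ^+ j * k).
have -> : m * (q ^+ j * k) = q ^+ j * (m * k) by ring.
by [].
Qed.

Lemma wK_mem (K : nat) : N (wK m K).
Proof.
apply: memN_eqv => //.
have H : eqv N (zK m K) (bpow (q ^+ K)).
  by have := depth K 1; rewrite !mulr1.
set B := bpow (q ^+ K).
apply: (eqv_trans hN (v := B ++ [:: LB] ++ inv_word B ++ [:: LBi])).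
  apply: eqv_cat => //; apply: eqv_cat => //; first exact: eqv_refl.
  apply: eqv_cat => //; [exact: eqv_inv | exact: eqv_refl].
apply: eqv_free => //.
rewrite catA (reduce_catl (u' := [:: LB] ++ B)).
  by rewrite -catA cat1s reduce_cons reduce_inv_cancel.
by rewrite /B -[[:: LB]]/(bpow 1) -!bpowD addrC.
Qed.

End BSder.

Lemma BS_wK m q K : BS m q (wK m K).
Proof. by move=> N hN hR; apply: wK_mem => //; exact: hR. Qed.

End M_D.
Import M_D.

Module M_E1.
Local Open Scope ring_scope.

Lemma dominance (t : rat) (B : nat) : forall (n : nat) (c : nat -> int),
  1 <= `|t| -> B%:R * n%:R < `|t| ->
  (forall j, (j < n)%N -> `|c j| <= B%:Z) ->
  \sum_(j < n) (c j)%:~R * t ^+ j = 0 ->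
  forall j, (j < n)%N -> c j = 0.
Proof.
elim=> [|n IH] c t1 tB cB S0 j; first by [].
rewrite big_ord_recr /= in S0.
set S := \sum_(i < n) _ in S0.
have bS : `|t| * `|S| <= (B%:R * n%:R) * `|t| ^+ n.
  apply: (le_trans (ler_pM _ _ (lexx _) (ler_norm_sum _ _ _))) => //.
  rewrite mulr_sumr.
  apply: (le_trans (y := \sum_(i < n) B%:R * `|t| ^+ n)).
    apply: ler_sum => i _.
    rewrite normrM normrX -intr_norm mulrA (mulrC `|t|) -mulrA -exprS.
    apply: ler_pM => //.
    - by rewrite exprn_ge0.
    - by rewrite -[B%:R]/((B%:Z)%:~R) ler_int; apply: cB; rewrite ltnS ltnW.
    - exact: (ler_weXn2l t1 (ltn_ord i)).
  by rewrite sumr_const card_ord -(mulr_natr _ n) mulrAC mul1r mulr_natr.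
have cn0 : c n = 0.
  apply/eqP; apply/negPn/negP => cn.
  have t0 : 0 < `|t| by lra.
  have h1 : `|t| ^+ n <= `|(c n)%:~R * t ^+ n : rat|.
    rewrite normrM normrX -intr_norm -{1}(mul1r (`|t| ^+ n)).
    apply: ler_pM => //; first by rewrite exprn_ge0.
    rewrite ler1z; move/eqP: cn; lia.
  have eS : S = - ((c n)%:~R * t ^+ n) by apply/eqP; rewrite -addr_eq0 S0.
  have : `|t| * `|t| ^+ n <= (B%:R * n%:R) * `|t| ^+ n.
    apply: le_trans bS; apply: ler_pM => //.
    - by rewrite exprn_ge0.
    - by move: h1; rewrite -(normrN ((c n)%:~R * t ^+ n)) -eS.
  have tn : 0 < `|t| ^+ n by rewrite exprn_gt0.
  rewrite ler_pM2r //.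
  have : B%:R * n%:R <= B%:R * (n.+1)%:R :> rat.
    by apply: ler_pM => //; rewrite ler_nat.
  lra.
rewrite cn0 mul0r addr0 in S0.
have tB' : B%:R * n%:R < `|t|.
  apply: le_lt_trans tB; apply: ler_pM => //; by rewrite ler_nat.
rewrite ltnS leq_eqVlt => /orP[/eqP -> //|].
apply: IH => // i lin; apply: cB; exact: ltnW.
Qed.

End M_E1.
Import M_E1.

Module M_E2.
Local Open Scope ring_scope.

Fixpoint cz (x : int) (w : word) (z : int) : int :=
  match w with
  | [::] => 0
  | LA :: w => cz (x + 1) w z
  | LAi :: w => cz (x - 1) w z
  | LB :: w => (if x == z then 1 else 0) + cz x w z
  | LBi :: w => cz x w z - (if x == z then 1 else 0)
  end.

Fixpoint ez (x : int) (w : word) : int :=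
  match w with
  | [::] => x
  | LA :: w => ez (x + 1) w
  | LAi :: w => ez (x - 1) w
  | _ :: w => ez x w
  end.

Lemma cz_shift w : forall x z d, cz (x + d) w (z + d) = cz x w z.
Proof.
elim: w => [|l w IH] x z d //=.
have E : ((x + d == z + d) = (x == z)) by apply/eqP/eqP => [|->]; [lia|].
case: l; rewrite ?E ?IH //.
- by rewrite (_ : x + d + 1 = (x + 1) + d) ?IH //; ring.
- by rewrite (_ : x + d - 1 = (x - 1) + d) ?IH //; ring.
Qed.

Lemma ez_shift w : forall x d, ez (x + d) w = ez x w + d.
Proof.
elim: w => [|l w IH] x d //=.
case: l => //.
- by rewrite (_ : x + d + 1 = (x + 1) + d) ?IH //; ring.
- by rewrite (_ : x + d - 1 = (x - 1) + d) ?IH //; ring.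
Qed.

Lemma ez_bound w : forall x, `|ez x w - x| <= (size w)%:Z.
Proof.
elim: w => [|l w IH] x /=; first by rewrite subrr.
case: l; move: (IH (x + 1)) (IH (x - 1)) (IH x); lia.
Qed.

Lemma cz_bound w : forall x z, `|cz x w z| <= (size w)%:Z.
Proof.
elim: w => [|l w IH] x z //=.
case: l; move: (IH (x + 1) z) (IH (x - 1) z) (IH x z); case: (x == z); lia.
Qed.

Lemma cz_far w : forall x z, (size w)%:Z < `|z - x| -> cz x w z = 0.
Proof.
elim: w => [|l w IH] x z //= H.
case: l.
- apply: IH; lia.
- apply: IH; lia.
- rewrite IH; last lia.
  case: eqP => //; lia.
- rewrite IH; last lia.
  case: eqP => //; lia.
Qed.

End M_E2.
Import M_E2.

Module M_E3.
Local Open Scope ring_scope.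

Definition stepR (s : rat) (x : letter) (y : rat) : rat :=
  match x with LA => s * y | LAi => y / s | LB => y + 1 | LBi => y - 1 end.

Section Rho.
Variable s : rat.
Hypothesis s0 : s != 0.

Lemma stepR_inv x y : stepR s (inv_letter x) (stepR s x y) = y.
Proof. by case: x => /=; field. Qed.

Lemma actR_nseqB n y : act (stepR s) (nseq n LB) y = y + n%:R.
Proof.
elim: n y => [|n IH] y; first by rewrite addr0.
rewrite [nseq _ _]/= act_cons IH /= -natr1; ring.
Qed.

Lemma actR_nseqBi n y : act (stepR s) (nseq n LBi) y = y - n%:R.
Proof.
elim: n y => [|n IH] y; first by rewrite subr0.
rewrite [nseq _ _]/= act_cons IH /= -natr1; ring.
Qed.

Lemma actR_bpow z y : act (stepR s) (bpow z) y = y + z%:~R.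
Proof.
case: z => n; first exact: actR_nseqB.
by rewrite actR_nseqBi NegzE mulrNz.
Qed.

Let t := s^-1.

Lemma sum_delta (n : nat) (x : int) : 0 <= x -> x < n%:Z ->
  \sum_(j < n) (if x == j%:Z then 1 else 0 : int)%:~R * t ^+ j = t ^+ absz x.
Proof.
move=> x0 xn.
have hx : (absz x < n)%N by lia.
rewrite (bigD1 (Ordinal hx)) //= big1 ?addr0.
  by rewrite (_ : x == Posz (absz x)) ?mul1r //; apply/eqP; lia.
move=> j /eqP ne; rewrite (_ : (x == j%:Z) = false) ?mul0r //.
apply/eqP => e; apply: ne; apply: val_inj => /=; lia.
Qed.

Lemma actR_formula (n : nat) w : forall x y,
  0 <= x - (size w)%:Z -> x + (size w)%:Z < n%:Z ->
  t ^+ absz (ez x w) * act (stepR s) w y =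
  t ^+ absz x * y + \sum_(j < n) (cz x w j%:Z)%:~R * t ^+ j.
Proof.
elim: w => [|l w IH] x y h1 h2.
  by rewrite /= big1 ?addr0 // => j _; rewrite mul0r.
rewrite act_cons; rewrite [size _]/= in h1 h2.
case: l h1 h2 => /= h1 h2.
- rewrite (IH (x + 1) (s * y)); [|lia|lia].
  rewrite (_ : absz (x + 1) = (absz x).+1); last lia.
  by rewrite exprS /t /=; congr (_ + _); field.
- rewrite (IH (x - 1) (y / s)); [|lia|lia].
  rewrite (_ : absz x = (absz (x - 1)).+1); last lia.
  by rewrite exprS /t /=; congr (_ + _); field.
- rewrite (IH x (y + 1)); [|lia|lia].
  under eq_bigr => j _ do rewrite intrD mulrDl.
  rewrite big_split /= sum_delta; [|lia|lia].
  ring.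
- rewrite (IH x (y - 1)); [|lia|lia].
  under eq_bigr => j _ do rewrite intrB mulrBl.
  rewrite sumrB /= sum_delta; [|lia|lia].
  ring.
Qed.

End Rho.

End M_E3.
Import M_E3.

Module M_E4.
Local Open Scope ring_scope.

Lemma rho_counts (s : rat) (s0 : s != 0) (L : nat) w :
  kerA (stepR s) w -> (size w <= L)%N -> 1 < `|s^-1| ->
  (L * (2 * L + 1))%:R < `|s^-1| ->
  ez L w = L /\ forall z, cz L w z = 0.
Proof.
move=> hk hs t1 tB.
set t := s^-1 in t1 tB.
set n := (2 * L + 1)%N.
have F y := @actR_formula s s0 n w L y ltac:(lia) ltac:(lia).
have S0 : \sum_(j < n) (cz L w j%:Z)%:~R * t ^+ j = 0.
  by have := F 0; rewrite hk !mulr0 add0r.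
have e1 : absz (ez L w) = L.
  have := F 1; rewrite hk S0 !mulr1 addr0 => /(congr1 Num.norm).
  rewrite !normrX => /ieexprIn -> //; first lra.
  by apply/eqP => h; rewrite h in t1; rewrite ltxx in t1.
have eb := ez_bound w L.
split; first by lia.
have hd := dominance (t := t) (B := L) (n := n) (c := fun j => cz L w j%:Z) ltac:(lra).
have hd' : forall j, (j < n)%N -> cz L w j%:Z = 0.
  apply: hd => //.
  - by rewrite -natrM.
  - move=> j _; have := cz_bound w L j; lia.
move=> z.
case: (boolP ((0 <= z) && (z < n%:Z))) => [/andP[z0 zn]|hz].
  have -> : z = (absz z)%:Z by lia.
  apply: hd'; lia.
apply: cz_far; move: hz; rewrite negb_and -!ltNge -leNgt; lia.
Qed.

Lemma BS_kerR (m q : int) w : m != 0 -> q != 0 -> BS m q w ->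
  kerA (stepR (m%:~R / q%:~R)) w.
Proof.
move=> m0 q0 H.
have mq0 : (m%:~R : rat) != 0 by rewrite intr_eq0.
have qq0 : (q%:~R : rat) != 0 by rewrite intr_eq0.
have s0 : (m%:~R / q%:~R : rat) != 0 by rewrite mulf_neq0 // invr_eq0.
apply: H; first exact: kerA_normal (stepR_inv s0).
move=> r -> y.
rewrite /bs_rel !act_cat /= actR_bpow actR_bpow /= rmorphN /=.
field; by apply/andP; split.
Qed.

End M_E4.
Import M_E4.

Module M_E5.
Local Open Scope ring_scope.

Definition stepG (K : int) (x : letter) (p : int * int * int) : int * int * int :=
  let: (pos, y1, y2) := p in
  match x with
  | LA => (pos + 1, y1, y2)
  | LAi => (pos - 1, y1, y2)
  | LB => if pos == K then (pos, y1 + 1, y2)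
          else if pos == 0 then (pos, y1, y2 + y1) else (pos, y1, y2)
  | LBi => if pos == K then (pos, y1 - 1, y2)
          else if pos == 0 then (pos, y1, y2 - y1) else (pos, y1, y2)
  end.

Section G.
Variable K : int.

Lemma stepG_inv x p : stepG K (inv_letter x) (stepG K x p) = p.
Proof.
case: p => [[pos y1] y2]; case: x => /=.
- by rewrite addrK.
- by rewrite subrK.
- case: (pos =P K) => [->|hK]; first by rewrite /= eqxx addrK.
  case: (pos =P 0) => [e0|h0] /=.
    by rewrite e0 in hK *; rewrite /= (negbTE (introN eqP hK)) addrK.
  by rewrite /= (negbTE (introN eqP hK)) (negbTE (introN eqP h0)).
- case: (pos =P K) => [->|hK]; first by rewrite /= eqxx subrK.
  case: (pos =P 0) => [e0|h0] /=.
    by rewrite e0 in hK *; rewrite /= (negbTE (introN eqP hK)) subrK.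
  by rewrite /= (negbTE (introN eqP hK)) (negbTE (introN eqP h0)).
Qed.

Lemma G_avoid0 w : forall x y1 y2,
  (0 < x - (size w)%:Z \/ x + (size w)%:Z < 0) ->
  act (stepG K) w (x, y1, y2) = (ez x w, y1 + cz x w K, y2).
Proof.
elim: w => [|l w IH] x y1 y2 h.
  by rewrite /= addr0.
rewrite act_cons; rewrite [size _]/= in h.
case: l h => /= h.
- by rewrite IH //; lia.
- by rewrite IH //; lia.
- rewrite (_ : (x == 0) = false); last by apply/eqP; lia.
  case: (x =P K) => [eK|hK].
    by rewrite IH; [congr (_, _, _); ring | lia].
  by rewrite IH; [rewrite add0r | lia].
- rewrite (_ : (x == 0) = false); last by apply/eqP; lia.
  case: (x =P K) => [eK|hK].
    by rewrite IH; [congr (_, _, _); ring | lia].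
  by rewrite IH; [rewrite subr0 | lia].
Qed.

Lemma G_avoidK w : forall x y1 y2,
  (K < x - (size w)%:Z \/ x + (size w)%:Z < K) ->
  act (stepG K) w (x, y1, y2) = (ez x w, y1, y2 + cz x w 0 * y1).
Proof.
elim: w => [|l w IH] x y1 y2 h.
  by rewrite /= mul0r addr0.
rewrite act_cons; rewrite [size _]/= in h.
case: l h => /= h.
- by rewrite IH //; lia.
- by rewrite IH //; lia.
- rewrite (_ : (x == K) = false); last by apply/eqP; lia.
  case: (x =P 0) => [e0|h0].
    by rewrite IH; [congr (_, _, _); ring | lia].
  by rewrite IH; [rewrite add0r | lia].
- rewrite (_ : (x == K) = false); last by apply/eqP; lia.
  case: (x =P 0) => [e0|h0].
    by rewrite IH; [congr (_, _, _); ring | lia].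
  by rewrite IH; [rewrite subr0 | lia].
Qed.

Lemma G_ker (L : nat) w : 2 * (L%:Z) < K -> (size w <= L)%N ->
  ez L w = L -> (forall z, cz L w z = 0) -> kerA (stepG K) w.
Proof.
move=> hK hs he hc [[x0 y1] y2].
have ez0 : ez x0 w = x0.
  have e := ez_shift w L%:Z (x0 - L%:Z).
  have e2 : L%:Z + (x0 - L%:Z) = x0 by ring.
  rewrite e2 he in e; rewrite e; ring.
have cz0 z : cz x0 w z = 0.
  have e := cz_shift w L%:Z (z - (x0 - L%:Z)) (x0 - L%:Z).
  have e2 : L%:Z + (x0 - L%:Z) = x0 by ring.
  have e3 : z - (x0 - L%:Z) + (x0 - L%:Z) = z by ring.
  by rewrite e2 e3 hc in e.
case: (boolP ((0 < x0 - (size w)%:Z) || (x0 + (size w)%:Z < 0))) => [/orP h|h].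
  by rewrite G_avoid0 // ez0 cz0 addr0.
rewrite G_avoidK ?ez0 ?cz0 ?mul0r ?addr0 //.
move: h; rewrite negb_or -!leNgt; lia.
Qed.

End G.

End M_E5.
Import M_E5.

Module M_E6.
Local Open Scope ring_scope.

Section G2.
Variable Kn : nat.
Let K : int := Kn%:Z.

Lemma actG_nseqA k x y1 y2 : act (stepG K) (nseq k LA) (x, y1, y2) = (x + k%:Z, y1, y2).
Proof.
elim: k x => [|k IH] x; first by rewrite addr0.
rewrite [nseq _ _]/= act_cons /= IH; congr (_, _, _); lia.
Qed.

Lemma actG_nseqAi k x y1 y2 : act (stepG K) (nseq k LAi) (x, y1, y2) = (x - k%:Z, y1, y2).
Proof.
elim: k x => [|k IH] x; first by rewrite subr0.
rewrite [nseq _ _]/= act_cons /= IH; congr (_, _, _); lia.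
Qed.

Lemma actG_nseqB k y1 y2 : act (stepG K) (nseq k LB) (K, y1, y2) = (K, y1 + k%:Z, y2).
Proof.
elim: k y1 => [|k IH] y1; first by rewrite addr0.
rewrite [nseq _ _]/= act_cons /= eqxx IH; congr (_, _, _); lia.
Qed.

Lemma actG_nseqBi k y1 y2 : act (stepG K) (nseq k LBi) (K, y1, y2) = (K, y1 - k%:Z, y2).
Proof.
elim: k y1 => [|k IH] y1; first by rewrite subr0.
rewrite [nseq _ _]/= act_cons /= eqxx IH; congr (_, _, _); lia.
Qed.

Lemma actG_bpow z y1 y2 : act (stepG K) (bpow z) (K, y1, y2) = (K, y1 + z, y2).
Proof.
case: z => n; first exact: actG_nseqB.
rewrite actG_nseqBi NegzE; congr (_, _, _); lia.
Qed.

Lemma actG_zK m y1 y2 : act (stepG K) (zK m Kn) (0, y1, y2) = (0, y1 + m ^+ Kn, y2).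
Proof.
rewrite /zK !act_cat actG_nseqA add0r actG_bpow actG_nseqAi.
by rewrite /K subrr.
Qed.

Lemma actG_wK m : (0 < Kn)%N ->
  act (stepG K) (wK m Kn) (0, 0, 0) = (0, 0, m ^+ Kn).
Proof.
move=> hK.
have K0 : ((0 : int) == K) = false by apply/eqP; rewrite /K; lia.
rewrite /wK act_cat actG_zK add0r !act_cat /= K0 add0r.
rewrite -{1}(add0r (m ^+ Kn)) -actG_zK act_inv; last exact: stepG_inv.
by rewrite /= K0 subr0.
Qed.

End G2.

End M_E6.
Import M_E6.

Module M_Main.
Local Open Scope ring_scope.

Lemma ratio_big (m q : int) (Y : nat) : m != 0%R -> (absz m * Y < absz q)%N ->
  (Y%:R < `|((m%:~R / q%:~R : rat))^-1|)%R.
Proof.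
move=> m0 hq.
have q0 : q != 0%R by apply/eqP => e; rewrite e in hq.
have mpos : (0 < `|m%:~R : rat|)%R by rewrite normr_gt0 intr_eq0.
rewrite invf_div normrM normfV ltr_pdivlMr // -!intr_norm.
rewrite -!abszE -[((absz q)%:Z)%:~R]/((absz q)%:R) -[((absz m)%:Z)%:~R]/((absz m)%:R).
by rewrite -natrM ltr_nat mulnC.
Qed.

Lemma maxsize_ge (rs : seq word) r : r \in rs ->
  (size r <= foldr (fun r acc => maxn (size r) acc) 0%N rs)%N.
Proof.
elim: rs => [|r' rs IH] //=; rewrite inE => /orP[/eqP ->|h].
  exact: leq_maxl.
exact: leq_trans (IH h) (leq_maxr _ _).
Qed.

Theorem corollary_main (m : int) (hm : m != 0%R) (xi : nat -> int) (hxi : madic m xi)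
  (xs : nat -> int) (hinf : tends_to_infty xs) (hconv : madic_converges m xs xi)
  (N : word -> Prop) (hN : is_normal N)
  (hlim : marked_converges (fun n => BS m (xs n)) N) :
  ~ finitely_presented N.
Proof.
move=> [rs hrs].
set L := foldr (fun r acc => maxn (size r) acc) 0%N rs.
have hL : forall r, r \in rs -> (size r <= L)%N by move=> r; exact: maxsize_ge.
set Kn := (2 * L + 1)%N.
have [n0 h0] := hlim L.
have [n1 h1] := hlim (size (wK m Kn)).
set Y := (L * (2 * L + 1) + 2)%N.
have [n2 h2] := hinf (absz m * Y)%N.
set n := (n0 + n1 + n2)%N.
set q := xs n.
have hq : (absz m * Y < absz q)%N by apply: h2; rewrite /n; lia.
have q0 : q != 0%R by apply/eqP => e; rewrite e in hq.
set s := (m%:~R / q%:~R : rat).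
have s0 : s != 0%R by rewrite mulf_neq0 ?invr_eq0 ?intr_eq0.
have tY := ratio_big hm hq.
have t1 : (1 < `|s^-1|)%R.
  by apply: le_lt_trans tY; rewrite /Y natrD ler_wpDl // (ler_nat _ 1 2).
have tB : ((L * (2 * L + 1))%:R < `|s^-1|)%R.
  by apply: lt_trans tY; rewrite /Y natrD ltrDl.
have hw : N (wK m Kn).
  apply: (h1 n _ (wK m Kn) (leqnn _)).1; last exact: BS_wK.
  by rewrite /n; lia.
have Mker : forall w, N w -> kerA (stepG Kn) w.
  move=> w /hrs Hw; apply: Hw; first exact: kerA_normal (@stepG_inv _).
  move=> r hr.
  have Nr : N r by apply/hrs => N' hN' HR; exact: HR.
  have BSr : BS m q r.
    by apply: (h0 n _ r (hL r hr)).2 => //; rewrite /n; lia.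
  have kr := BS_kerR hm q0 BSr.
  have [he hc] := rho_counts s0 kr (hL r hr) t1 tB.
  apply: (G_ker (L := L)) => //; last exact: hL.
  rewrite /Kn PoszD PoszM; lia.
have := Mker _ hw (0, 0, 0)%R.
rewrite actG_wK; last by rewrite /Kn addn1.
case=> /eqP; rewrite expf_eq0 (negbTE hm) andbF.
by [].
Qed.

End M_Main.
Import M_Main.

Theorem corollary3p2 (m : int) (hm : m != 0%R) (xi : nat -> int) (hxi : madic m xi)
  (xs : nat -> int) (hinf : tends_to_infty xs) (hconv : madic_converges m xs xi)
  (N : word -> Prop) (hN : is_normal N)
  (hlim : marked_converges (fun n => BS m (xs n)) N) :
  ~ finitely_presented N.
Proof. exact: (@corollary_main m hm xi hxi xs hinf hconv N hN hlim). Qed.
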